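(* Let $u_1(t_1,t_2)$ and $u_2(t_1,t_2)$ be two left normed commutators in the free variables $t_1,t_2$, each of degree at least two. Then $u_1(C_1,C_2)u_2(C_1,C_2)$ is strongly central in $F$.
   Context: $K$ is an infinite field of characteristic different from 2. Let $X=\{x_1,x_2,x_1',x_2'\}$ and $Y=\{y_1,y_2,y_1',y_2'\}$, and let $K[X;Y]\cong K[X]\otimes_K E(Y)$ be the free supercommutative algebra: the $x$'s are even commuting variables, the $y$'s are odd pairwise anticommuting variables, and $E(Y)$ is the Grassmann algebra on the vector space with basis $Y$. Put $C_1=\begin{pmatrix} x_1&y_1\\ y_1'&x_1'\end{pmatrix}$, $C_2=\begin{pmatrix} x_2&y_2\\ y_2'&x_2'\end{pmatrix}$, and let $F=K[C_1,C_2]$ be the unital $K$-subalgebra of $M_2(K[X;Y])$ generated by $C_1,C_2$. Commutators are $[a,b]=ab-ba$, left normed: $[a_1,\ldots,a_k]=[[a_1,\ldots,a_{k-1}],a_k]$. An element $a\in F$ is strongly central if $a$ is central in $F$ and $ab$ is central in $F$ for every $b\in F$. *)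

(* Defs.v *)
From HB Require Import structures.
From mathcomp Require Import all_boot all_order all_algebra.
From mathcomp Require Import mpoly.
Set Implicit Arguments. Unset Strict Implicit. Unset Printing Implicit Defensive.
Import Order.TTheory GRing.Theory.
Local Open Scope ring_scope.

Section SuperAlg.
Variable K : fieldType.

(* K[X] with X = {x1, x2, x1', x2'} encoded as 'X_0, 'X_1, 'X_2, 'X_3. *)
Definition KX := {mpoly K[4]}.

(* K[X;Y] = K[X] (x) E(Y), Y = {y1, y2, y1', y2'} indexed by 'I_4 in that order.
   An element is the family of its coefficients on the Grassmann basis
   y_A = y_{a_1} ... y_{a_k} (a_1 < ... < a_k), A a subset of 'I_4. *)
Definition SC := {ffun {set 'I_4} -> KX}.

(* sign of y_A y_B = sgnAB A B * y_(A :|: B), for disjoint A B *)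
Definition sgnAB (A B : {set 'I_4}) : KX :=
  (-1) ^+ #|[set p : 'I_4 * 'I_4 | [&& p.1 \in A, p.2 \in B & (p.2 < p.1)%N]]|.

Definition sc_mul (g h : SC) : SC :=
  [ffun S : {set 'I_4} => \sum_(A : {set 'I_4} | A \subset S) sgnAB A (S :\: A) * g A * h (S :\: A)].

Definition sc_one : SC := [ffun S : {set 'I_4} => if S == set0 then 1 else 0].

Definition sc_scale (c : K) (g : SC) : SC := [ffun S => c *: g S].

Definition xv (i : 'I_4) : SC := [ffun S : {set 'I_4} => if S == set0 then 'X_i else 0].
Definition yv (j : 'I_4) : SC := [ffun S : {set 'I_4} => if S == [set j] then 1 else 0].

Definition M2 := 'M[SC]_2.

Definition mxmul2 (A B : M2) : M2 :=
  \matrix_(i, j) \sum_(k < 2) sc_mul (A i k) (B k j).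

Definition mxone2 : M2 := \matrix_(i, j) if i == j then sc_one else 0.

Definition mxscale2 (c : K) (A : M2) : M2 := \matrix_(i, j) sc_scale c (A i j).

Definition mk2 (a b c d : SC) : M2 :=
  \matrix_(i < 2, j < 2)
    if i == 0 :> nat then (if j == 0 :> nat then a else b)
    else (if j == 0 :> nat then c else d).

(* C_1 = [[x1, y1], [y1', x1']], C_2 = [[x2, y2], [y2', x2']] *)
Definition C1 : M2 := mk2 (xv 0) (yv 0) (yv 2) (xv 2).
Definition C2 : M2 := mk2 (xv 1) (yv 1) (yv 3) (xv 3).

Definition Cgen (i : 'I_2) : M2 := if i == 0 :> nat then C1 else C2.

Inductive inF : M2 -> Prop :=
  | inF_one : inF mxone2
  | inF_gen (i : 'I_2) : inF (Cgen i)
  | inF_add a b : inF a -> inF b -> inF (a + b)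
  | inF_scale (c : K) a : inF a -> inF (mxscale2 c a)
  | inF_mul a b : inF a -> inF b -> inF (mxmul2 a b).

Definition centralF (a : M2) : Prop :=
  inF a /\ forall b, inF b -> mxmul2 a b = mxmul2 b a.

Definition strongly_centralF (a : M2) : Prop :=
  centralF a /\ forall b, inF b -> centralF (mxmul2 a b).

Definition comm2 (a b : M2) : M2 := mxmul2 a b - mxmul2 b a.

(* the left normed commutator [t_{w_0}, t_{w_1}, ..., t_{w_k}] in the free
   variables t_1, t_2 (indexed by 'I_2), evaluated at t_i := C_i.
   Its degree is size w. *)
Definition lncomm (w : seq 'I_2) : M2 :=
  match w with
  | [::] => mxone2
  | i :: s => foldl (fun acc j => comm2 acc (Cgen j)) (Cgen i) s
  end.

End SuperAlg.

(* Main.v *)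
Require Import Defs.
From HB Require Import structures.
From mathcomp Require Import all_boot all_order all_algebra.
From mathcomp Require Import mpoly.
From mathcomp Require Import ring.
Set Implicit Arguments. Unset Strict Implicit. Unset Printing Implicit Defensive.
Import GRing.Theory.
Local Open Scope ring_scope.

Section G.
Variable K : fieldType.
Local Notation KX := (KX K).
Local Notation SC := (SC K).

Definition i0 : 'I_4 := @Ordinal 4 0 isT.
Definition i1 : 'I_4 := @Ordinal 4 1 isT.
Definition i2 : 'I_4 := @Ordinal 4 2 isT.
Definition i3 : 'I_4 := @Ordinal 4 3 isT.

Lemma I4_cases (x : 'I_4) : x = i0 \/ x = i1 \/ x = i2 \/ x = i3.
Proof.
case: x => [[|[|[|[|m]]]] H].
- by left; apply/val_inj.
- by right; left; apply/val_inj.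
- by right; right; left; apply/val_inj.
- by right; right; right; apply/val_inj.
- by [].
Qed.

Fixpoint hlf (n : nat) : nat := match n with 0 => 0 | 1 => 0 | S (S k) => S (hlf k) end.
Fixpoint bitf (n x : nat) : bool := match x with 0 => odd n | S y => bitf (hlf n) y end.
Definition b2n (b : bool) : nat := if b then 1 else 0.
Definition mk4 (b0 b1 b2 b3 : bool) : nat :=
  Nat.add (b2n b0) (Nat.add (Nat.mul 2 (b2n b1)) (Nat.add (Nat.mul 4 (b2n b2)) (Nat.mul 8 (b2n b3)))).

Definition dec (n : nat) : {set 'I_4} := [set x : 'I_4 | bitf n x].
Definition enc (S : {set 'I_4}) : nat := mk4 (i0 \in S) (i1 \in S) (i2 \in S) (i3 \in S).

Lemma bit_mk4 b0 b1 b2 b3 :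
  [/\ bitf (mk4 b0 b1 b2 b3) 0 = b0, bitf (mk4 b0 b1 b2 b3) 1 = b1,
      bitf (mk4 b0 b1 b2 b3) 2 = b2 & bitf (mk4 b0 b1 b2 b3) 3 = b3].
Proof. by case: b0; case: b1; case: b2; case: b3. Qed.

Lemma mk4_lt b0 b1 b2 b3 : (mk4 b0 b1 b2 b3 < 16)%N.
Proof. by case: b0; case: b1; case: b2; case: b3. Qed.

Lemma enc_lt S : (enc S < 16)%N.
Proof. exact: mk4_lt. Qed.

Lemma mem_dec n (x : 'I_4) : (x \in dec n) = bitf n x.
Proof. by rewrite inE. Qed.

Lemma dec_enc S : dec (enc S) = S.
Proof.
apply/setP => x; rewrite mem_dec /enc.
have [h0 h1 h2 h3] := bit_mk4 (i0 \in S) (i1 \in S) (i2 \in S) (i3 \in S).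
by case: (I4_cases x) => [->|[->|[->|->]]].
Qed.

Lemma enc_dec n : (n < 16)%N -> enc (dec n) = n.
Proof.
move=> hn; rewrite /enc !mem_dec.
by do 16! (case: n hn => [|n] hn; first by []).
Qed.

Lemma dec_inj n m : (n < 16)%N -> (m < 16)%N -> (dec n == dec m) = (n == m).
Proof.
move=> hn hm; apply/eqP/eqP => [h|->] //.
by rewrite -(enc_dec hn) -(enc_dec hm) h.
Qed.

End G.

Definition cntb (i j : nat) : nat :=
  Nat.add (b2n (bitf i 1 && bitf j 0)) (Nat.add (b2n (bitf i 2 && bitf j 0))
  (Nat.add (b2n (bitf i 2 && bitf j 1)) (Nat.add (b2n (bitf i 3 && bitf j 0))
  (Nat.add (b2n (bitf i 3 && bitf j 1)) (b2n (bitf i 3 && bitf j 2)))))).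

Lemma card_dec i j : #|[set p : 'I_4 * 'I_4 | [&& p.1 \in dec i, p.2 \in dec j & (p.2 < p.1)%N]]| = cntb i j.
Proof.
rewrite -sum1_card big_mkcond /=.
have pb : forall F : 'I_4 * 'I_4 -> nat, (\sum_(p : 'I_4 * 'I_4) F p = \sum_(a : 'I_4) \sum_(b : 'I_4) F (a, b))%N.
  by move=> F; rewrite pair_big; apply: eq_bigr => -[a b].
rewrite pb.
rewrite !big_ord_recl !big_ord0 /=.
rewrite !inE /cntb /b2n /bump /=.
by case: (odd i); case: (odd (hlf i)); case: (odd (hlf (hlf i))); case: (odd (hlf (hlf (hlf i))));
   case: (odd j); case: (odd (hlf j)); case: (odd (hlf (hlf j))); case: (odd (hlf (hlf (hlf j)))).
Qed.

Definition subb (i n : nat) : bool :=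
  [&& bitf i 0 ==> bitf n 0, bitf i 1 ==> bitf n 1, bitf i 2 ==> bitf n 2 & bitf i 3 ==> bitf n 3].
Definition diffb (n i : nat) : nat :=
  mk4 (bitf n 0 && ~~ bitf i 0) (bitf n 1 && ~~ bitf i 1) (bitf n 2 && ~~ bitf i 2) (bitf n 3 && ~~ bitf i 3).

Lemma sub_dec i n : (dec i \subset dec n) = subb i n.
Proof.
apply/subsetP/idP.
- move=> H; rewrite /subb; apply/and4P; split; apply/implyP => h.
  + by have := H i0; rewrite !mem_dec; apply.
  + by have := H i1; rewrite !mem_dec; apply.
  + by have := H i2; rewrite !mem_dec; apply.
  + by have := H i3; rewrite !mem_dec; apply.
- move=> /and4P [h0 h1 h2 h3] x; rewrite !mem_dec.
  by case: (I4_cases x) => [->|[->|[->|->]]]; apply/implyP.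
Qed.

Lemma setD_dec n i : dec n :\: dec i = dec (diffb n i).
Proof.
apply/setP => x; rewrite !inE /diffb.
have [h0 h1 h2 h3] := bit_mk4 (bitf n 0 && ~~ bitf i 0) (bitf n 1 && ~~ bitf i 1) (bitf n 2 && ~~ bitf i 2) (bitf n 3 && ~~ bitf i 3).
by case: (I4_cases x) => [->|[->|[->|->]]]; rewrite /= ?h0 ?h1 ?h2 ?h3 andbC.
Qed.

Section S.
Variable K : fieldType.

Lemma sc_mulE (g h : SC K) n :
  sc_mul g h (dec n) = \sum_(i < 16) (if subb i n then (-1) ^+ (cntb i (diffb n i)) * g (dec i) * h (dec (diffb n i)) else 0).
Proof.
rewrite /sc_mul ffunE.
rewrite (reindex (fun i : 'I_16 => dec i)) /=; last first.
  apply: onW_bij; exists (fun S => Ordinal (enc_lt S)) => [i|S].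
  - by apply/val_inj => /=; apply: enc_dec; exact: ltn_ord.
  - exact: dec_enc.
rewrite big_mkcond; apply: eq_bigr => i _.
by rewrite sub_dec setD_dec /sgnAB card_dec.
Qed.
End S.

Section R.
Variable K : fieldType.
Local Notation KX := (Defs.KX K).
Local Notation SC := (Defs.SC K).
Record R16 := MkR { r0 : KX; r1 : KX; r2 : KX; r3 : KX; r4 : KX; r5 : KX; r6 : KX; r7 : KX; r8 : KX; r9 : KX; r10 : KX; r11 : KX; r12 : KX; r13 : KX; r14 : KX; r15 : KX }.
Definition sel (r : R16) (n : nat) : KX := match n with 0 => r0 r | 1 => r1 r | 2 => r2 r | 3 => r3 r | 4 => r4 r | 5 => r5 r | 6 => r6 r | 7 => r7 r | 8 => r8 r | 9 => r9 r | 10 => r10 r | 11 => r11 r | 12 => r12 r | 13 => r13 r | 14 => r14 r | _ => r15 r end.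
Definition toSC (r : R16) : SC := [ffun S => sel r (enc S)].
Definition ofSC (g : SC) : R16 := MkR (g (dec 0)) (g (dec 1)) (g (dec 2)) (g (dec 3)) (g (dec 4)) (g (dec 5)) (g (dec 6)) (g (dec 7)) (g (dec 8)) (g (dec 9)) (g (dec 10)) (g (dec 11)) (g (dec 12)) (g (dec 13)) (g (dec 14)) (g (dec 15)).
Lemma R16_eq a0 a1 a2 a3 a4 a5 a6 a7 a8 a9 a10 a11 a12 a13 a14 a15 b0 b1 b2 b3 b4 b5 b6 b7 b8 b9 b10 b11 b12 b13 b14 b15 : a0 = b0 -> a1 = b1 -> a2 = b2 -> a3 = b3 -> a4 = b4 -> a5 = b5 -> a6 = b6 -> a7 = b7 -> a8 = b8 -> a9 = b9 -> a10 = b10 -> a11 = b11 -> a12 = b12 -> a13 = b13 -> a14 = b14 -> a15 = b15 -> MkR a0 a1 a2 a3 a4 a5 a6 a7 a8 a9 a10 a11 a12 a13 a14 a15 = MkR b0 b1 b2 b3 b4 b5 b6 b7 b8 b9 b10 b11 b12 b13 b14 b15.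
Proof. by move=> -> -> -> -> -> -> -> -> -> -> -> -> -> -> -> ->. Qed.
Definition radd (a b : R16) : R16 := MkR (r0 a + r0 b) (r1 a + r1 b) (r2 a + r2 b) (r3 a + r3 b) (r4 a + r4 b) (r5 a + r5 b) (r6 a + r6 b) (r7 a + r7 b) (r8 a + r8 b) (r9 a + r9 b) (r10 a + r10 b) (r11 a + r11 b) (r12 a + r12 b) (r13 a + r13 b) (r14 a + r14 b) (r15 a + r15 b).
Definition rneg (a : R16) : R16 := MkR (- r0 a) (- r1 a) (- r2 a) (- r3 a) (- r4 a) (- r5 a) (- r6 a) (- r7 a) (- r8 a) (- r9 a) (- r10 a) (- r11 a) (- r12 a) (- r13 a) (- r14 a) (- r15 a).
Definition rscale (c : K) (a : R16) : R16 := MkR (c%:MP * r0 a) (c%:MP * r1 a) (c%:MP * r2 a) (c%:MP * r3 a) (c%:MP * r4 a) (c%:MP * r5 a) (c%:MP * r6 a) (c%:MP * r7 a) (c%:MP * r8 a) (c%:MP * r9 a) (c%:MP * r10 a) (c%:MP * r11 a) (c%:MP * r12 a) (c%:MP * r13 a) (c%:MP * r14 a) (c%:MP * r15 a).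
Definition rmul (a b : R16) : R16 := MkR (r0 a * r0 b) (r0 a * r1 b + r1 a * r0 b) (r0 a * r2 b + r2 a * r0 b) (r0 a * r3 b + r1 a * r2 b - r2 a * r1 b + r3 a * r0 b) (r0 a * r4 b + r4 a * r0 b) (r0 a * r5 b + r1 a * r4 b - r4 a * r1 b + r5 a * r0 b) (r0 a * r6 b + r2 a * r4 b - r4 a * r2 b + r6 a * r0 b) (r0 a * r7 b + r1 a * r6 b - r2 a * r5 b + r3 a * r4 b + r4 a * r3 b - r5 a * r2 b + r6 a * r1 b + r7 a * r0 b) (r0 a * r8 b + r8 a * r0 b) (r0 a * r9 b + r1 a * r8 b - r8 a * r1 b + r9 a * r0 b) (r0 a * r10 b + r2 a * r8 b - r8 a * r2 b + r10 a * r0 b) (r0 a * r11 b + r1 a * r10 b - r2 a * r9 b + r3 a * r8 b + r8 a * r3 b - r9 a * r2 b + r10 a * r1 b + r11 a * r0 b) (r0 a * r12 b + r4 a * r8 b - r8 a * r4 b + r12 a * r0 b) (r0 a * r13 b + r1 a * r12 b - r4 a * r9 b + r5 a * r8 b + r8 a * r5 b - r9 a * r4 b + r12 a * r1 b + r13 a * r0 b) (r0 a * r14 b + r2 a * r12 b - r4 a * r10 b + r6 a * r8 b + r8 a * r6 b - r10 a * r4 b + r12 a * r2 b + r14 a * r0 b) (r0 a * r15 b + r1 a * r14 b - r2 a * r13 b + r3 a * r12 b + r4 a * r11 b - r5 a * r10 b + r6 a * r9 b + r7 a * r8 b - r8 a * r7 b + r9 a * r6 b - r10 a * r5 b - r11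 a * r4 b + r12 a * r3 b + r13 a * r2 b - r14 a * r1 b + r15 a * r0 b).
Definition rK (c : KX) : R16 := MkR c 0 0 0 0 0 0 0 0 0 0 0 0 0 0 0.
Definition rzero : R16 := rK 0.
Definition rone : R16 := rK 1.
Definition rY0 : R16 := MkR 0 1 0 0 0 0 0 0 0 0 0 0 0 0 0 0.
Definition rY1 : R16 := MkR 0 0 1 0 0 0 0 0 0 0 0 0 0 0 0 0.
Definition rY2 : R16 := MkR 0 0 0 0 1 0 0 0 0 0 0 0 0 0 0 0.
Definition rY3 : R16 := MkR 0 0 0 0 0 0 0 0 1 0 0 0 0 0 0 0.
Lemma R16_eta (a b : R16) : r0 a = r0 b -> r1 a = r1 b -> r2 a = r2 b -> r3 a = r3 b -> r4 a = r4 b -> r5 a = r5 b -> r6 a = r6 b -> r7 a = r7 b -> r8 a = r8 b -> r9 a = r9 b -> r10 a = r10 b -> r11 a = r11 b -> r12 a = r12 b -> r13 a = r13 b -> r14 a = r14 b -> r15 a = r15 b -> a = b.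
Proof. by case: a; case: b => /= ? ? ? ? ? ? ? ? ? ? ? ? ? ? ? ? ? ? ? ? ? ? ? ? ? ? ? ? ? ? ? ? -> -> -> -> -> -> -> -> -> -> -> -> -> -> -> ->. Qed.
End R.

Section T.
Variable K : fieldType.
Local Notation KX := (Defs.KX K).
Local Notation SC := (Defs.SC K).
Local Notation R16 := (R16 K).

Lemma SC_ext (g h : SC) : (forall n, (n < 16)%N -> g (dec n) = h (dec n)) -> g = h.
Proof. by move=> H; apply/ffunP => S; rewrite -(dec_enc S); apply: H; apply: enc_lt. Qed.

Lemma toSC_dec (r : R16) n : (n < 16)%N -> toSC r (dec n) = sel r n.
Proof. by move=> hn; rewrite ffunE enc_dec. Qed.

Lemma toSC_ofSC (g : SC) : toSC (ofSC g) = g.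
Proof.
apply: SC_ext => n hn; rewrite toSC_dec //.
by do 16! (case: n hn => [|n] hn; first by []).
Qed.

Ltac c16 tac := let n := fresh "n" in let hn := fresh "hn" in
  apply: SC_ext => n hn; do 16! (case: n hn => [|n] hn; first by tac).

Lemma toSC_add (a b : R16) : toSC a + toSC b = toSC (radd a b).
Proof. by c16 ltac:(rewrite !ffunE !enc_dec). Qed.

Lemma toSC_opp (a : R16) : - toSC a = toSC (rneg a).
Proof. by c16 ltac:(rewrite !ffunE !enc_dec). Qed.

Lemma toSC_scale c (a : R16) : sc_scale c (toSC a) = toSC (rscale c a).
Proof. by c16 ltac:(rewrite !ffunE !enc_dec //= mul_mpolyC). Qed.

Lemma toSC_zero : 0 = toSC (rzero K).
Proof. by c16 ltac:(rewrite !ffunE !enc_dec). Qed.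

Lemma set0_dec : set0 = dec 0.
Proof. by apply/setP => x; rewrite !inE; case: (I4_cases x) => [->|[->|[->|->]]]. Qed.

Lemma toSC_one : sc_one K = toSC (rone K).
Proof. by c16 ltac:(rewrite !ffunE !enc_dec // set0_dec dec_inj). Qed.

Lemma toSC_xv i : xv K i = toSC (rK 'X_i).
Proof. by c16 ltac:(rewrite !ffunE !enc_dec // set0_dec dec_inj). Qed.

Lemma set1_dec (i : 'I_4) : [set i] = dec (2 ^ i).
Proof.
by apply/setP => x; rewrite !inE; case: (I4_cases x) => [->|[->|[->|->]]];
  case: (I4_cases i) => [->|[->|[->|->]]].
Qed.

Lemma toSC_yv0 : yv K i0 = toSC (rY0 K).
Proof. by c16 ltac:(rewrite !ffunE !enc_dec // set1_dec dec_inj). Qed.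
Lemma toSC_yv1 : yv K i1 = toSC (rY1 K).
Proof. by c16 ltac:(rewrite !ffunE !enc_dec // set1_dec dec_inj). Qed.
Lemma toSC_yv2 : yv K i2 = toSC (rY2 K).
Proof. by c16 ltac:(rewrite !ffunE !enc_dec // set1_dec dec_inj). Qed.
Lemma toSC_yv3 : yv K i3 = toSC (rY3 K).
Proof. by c16 ltac:(rewrite !ffunE !enc_dec // set1_dec dec_inj). Qed.

Lemma toSC_mul (a b : R16) : sc_mul (toSC a) (toSC b) = toSC (rmul a b).
Proof.
by c16 ltac:(rewrite sc_mulE !big_ord_recl big_ord0 /bump /= !toSC_dec //=; ring).
Qed.

End T.

Section M.
Variable K : fieldType.
Local Notation KX := (Defs.KX K).
Local Notation SC := (Defs.SC K).
Local Notation R16 := (R16 K).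
Local Notation M2 := (M2 K).

Record M4 := MkM { m11 : R16; m12 : R16; m21 : R16; m22 : R16 }.

Lemma M4_eq a b c d a' b' c' d' : a = a' -> b = b' -> c = c' -> d = d' -> MkM a b c d = MkM a' b' c' d'.
Proof. by move=> -> -> -> ->. Qed.

Definition toM (A : M4) : M2 := mk2 (toSC (m11 A)) (toSC (m12 A)) (toSC (m21 A)) (toSC (m22 A)).
Definition o0 : 'I_2 := @Ordinal 2 0 isT.
Definition o1 : 'I_2 := @Ordinal 2 1 isT.
Definition ofM (A : M2) : M4 := MkM (ofSC (A o0 o0)) (ofSC (A o0 o1)) (ofSC (A o1 o0)) (ofSC (A o1 o1)).

Lemma I2_cases (x : 'I_2) : x = o0 \/ x = o1.
Proof. case: x => [[|[|m]] H]; [left|right|by []]; exact/val_inj. Qed.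

Lemma toM_ofM A : toM (ofM A) = A.
Proof.
apply/matrixP => i j; rewrite /toM /mk2 mxE.
by case: (I2_cases i) => ->; case: (I2_cases j) => -> /=; rewrite toSC_ofSC.
Qed.

Definition rmm (A B : M4) : M4 :=
  MkM (radd (rmul (m11 A) (m11 B)) (rmul (m12 A) (m21 B)))
      (radd (rmul (m11 A) (m12 B)) (rmul (m12 A) (m22 B)))
      (radd (rmul (m21 A) (m11 B)) (rmul (m22 A) (m21 B)))
      (radd (rmul (m21 A) (m12 B)) (rmul (m22 A) (m22 B))).
Definition rmadd (A B : M4) : M4 :=
  MkM (radd (m11 A) (m11 B)) (radd (m12 A) (m12 B)) (radd (m21 A) (m21 B)) (radd (m22 A) (m22 B)).
Definition rmneg (A : M4) : M4 := MkM (rneg (m11 A)) (rneg (m12 A)) (rneg (m21 A)) (rneg (m22 A)).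
Definition rmscale c (A : M4) : M4 :=
  MkM (rscale c (m11 A)) (rscale c (m12 A)) (rscale c (m21 A)) (rscale c (m22 A)).
Definition rmzero : M4 := MkM (rzero K) (rzero K) (rzero K) (rzero K).
Definition rmone : M4 := MkM (rone K) (rzero K) (rzero K) (rone K).

Lemma toM_mul A B : mxmul2 (toM A) (toM B) = toM (rmm A B).
Proof.
apply/matrixP => i j; rewrite /mxmul2 /toM /mk2 !mxE !big_ord_recl big_ord0 addr0 !mxE.
by case: (I2_cases i) => ->; case: (I2_cases j) => -> /=; rewrite !toSC_mul toSC_add.
Qed.

Lemma toM_add A B : toM A + toM B = toM (rmadd A B).
Proof.
apply/matrixP => i j; rewrite /toM /mk2 !mxE.
by case: (I2_cases i) => ->; case: (I2_cases j) => -> /=; rewrite toSC_add.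
Qed.

Lemma toM_opp A : - toM A = toM (rmneg A).
Proof.
apply/matrixP => i j; rewrite /toM /mk2 !mxE.
by case: (I2_cases i) => ->; case: (I2_cases j) => -> /=; rewrite toSC_opp.
Qed.

Lemma toM_scale c A : mxscale2 c (toM A) = toM (rmscale c A).
Proof.
apply/matrixP => i j; rewrite /mxscale2 /toM /mk2 !mxE.
by case: (I2_cases i) => ->; case: (I2_cases j) => -> /=; rewrite toSC_scale.
Qed.

Lemma toM_zero : 0 = toM rmzero.
Proof.
apply/matrixP => i j; rewrite /toM /mk2 !mxE.
by case: (I2_cases i) => ->; case: (I2_cases j) => -> /=; rewrite -toSC_zero.
Qed.

Lemma toM_one : mxone2 K = toM rmone.
Proof.
apply/matrixP => i j; rewrite /mxone2 /toM /mk2 !mxE.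
by case: (I2_cases i) => ->; case: (I2_cases j) => -> /=; rewrite -?toSC_zero -?toSC_one.
Qed.

End M.

Section Eta.
Variable K : fieldType.
Lemma M4_eta (A B : M4 K) : m11 A = m11 B -> m12 A = m12 B -> m21 A = m21 B -> m22 A = m22 B -> A = B.
Proof. by case: A; case: B => /= ? ? ? ? ? ? ? ? -> -> -> ->. Qed.
End Eta.

Section E.
Variable K : fieldType.
Local Notation KX := (Defs.KX K).
Local Notation M4 := (M4 K).
Local Notation MkR := (@MkR K).
Local Notation MkM := (@MkM K).
Definition rc (x0 x1 x2 x3 nu : KX) : M4 := MkM (MkR 0 0 0 0 0 0 (- nu) 0 0 (nu) 0 0 0 0 0 0) (MkR 0 (x3 * nu - x1 * nu) (- x2 * nu + x0 * nu) 0 0 0 0 0 0 0 0 0 0 0 0 0) (MkR 0 0 0 0 (- x3 * nu + x1 * nu) 0 0 0 (x2 * nu - x0 * nu) 0 0 0 0 0 0 0) (MkR 0 0 0 0 0 0 (- nu) 0 0 (nu) 0 0 0 0 0 0).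
Definition rT (x0 x1 x2 x3 m e g1 g2 : KX) : M4 := MkM (MkR 0 0 0 0 0 (x3 * m * g1 - x3 * m * e * g1 - x1 * m * g1 + x1 * m * e * g1) (- x3 * m * e * g2 - x2 * m * g1 + x1 * m * e * g2 + x0 * m * g1) 0 0 (x3 * m * g2 + x2 * m * e * g1 - x1 * m * g2 - x0 * m * e * g1) (- x2 * m * g2 + x2 * m * e * g2 + x0 * m * g2 - x0 * m * e * g2) 0 0 0 0 0) (MkR 0 (x3 ^+ 2 * m * g2 + x2 * x3 * m * g1 - 2%:R * x1 * x3 * m * g2 - x1 * x2 * m * g1 + x1 ^+ 2 * m * g2 - x0 * x3 * m * g1 + x0 * x1 * m * g1) (- x2 * x3 * m * g2 - x2 ^+ 2 * m * g1 + x1 * x2 * m * g2 + x0 * x3 * m * g2 + 2%:R * x0 * x2 * m * g1 - x0 * x1 * m * g2 - x0 ^+ 2 * m * g1) 0 0 0 0 0 0 0 0 0 0 0 0 0) (MkR 0 0 0 0 (- x3 ^+ 2 * m * e * g2 - x2 * x3 * m * e * g1 + 2%:R * x1 * x3 * m * e * g2 + x1 * x2 * m * e * g1 - x1 ^+ 2 * m * e * g2 + x0 * x3 * m * e * g1 - x0 * x1 * m * e * g1) 0 0 0 (x2 * x3 * m * e * g2 + x2 ^+ 2 * m * e * g1 - x1 * x2 * m * e * g2 - x0 * x3 * m * e * g2 - 2%:R * x0 * x2 * m * e * g1 + x0 * x1 * m * e * g2 + x0 ^+ 2 * m * e * g1) 0 0 0 0 0 0 0) (MkR 0 0 0 0 0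 (x3 * m * g1 - x3 * m * e * g1 - x1 * m * g1 + x1 * m * e * g1) (- x3 * m * e * g2 - x2 * m * g1 + x1 * m * e * g2 + x0 * m * g1) 0 0 (x3 * m * g2 + x2 * m * e * g1 - x1 * m * g2 - x0 * m * e * g1) (- x2 * m * g2 + x2 * m * e * g2 + x0 * m * g2 - x0 * m * e * g2) 0 0 0 0 0).
Definition rC1 (x0 x2 : KX) : M4 := MkM (rK x0) (rY0 K) (rY2 K) (rK x2).
Definition rC2 (x1 x3 : KX) : M4 := MkM (rK x1) (rY1 K) (rY3 K) (rK x3).
Definition rcomm (A B : M4) : M4 := rmadd (rmm A B) (rmneg (rmm B A)).

Ltac cid := apply: M4_eta; apply: R16_eta; simpl; ring.

Lemma E1 x0 x1 x2 x3 : rcomm (rC1 x0 x2) (rC1 x0 x2) = rc x0 x1 x2 x3 0.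
Proof. cid. Qed.
Lemma E2 x0 x1 x2 x3 : rcomm (rC2 x1 x3) (rC2 x1 x3) = rc x0 x1 x2 x3 0.
Proof. cid. Qed.
Lemma E3 x0 x1 x2 x3 : rcomm (rC1 x0 x2) (rC2 x1 x3) = rc x0 x1 x2 x3 1.
Proof. cid. Qed.
Lemma E4 x0 x1 x2 x3 : rcomm (rC2 x1 x3) (rC1 x0 x2) = rc x0 x1 x2 x3 (-1).
Proof. cid. Qed.
Lemma E5 x0 x1 x2 x3 nu : rcomm (rc x0 x1 x2 x3 nu) (rC1 x0 x2) = rT x0 x1 x2 x3 nu (-1) 1 0.
Proof. cid. Qed.
Lemma E6 x0 x1 x2 x3 nu : rcomm (rc x0 x1 x2 x3 nu) (rC2 x1 x3) = rT x0 x1 x2 x3 nu (-1) 0 1.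
Proof. cid. Qed.
Lemma E7 x0 x1 x2 x3 m e g1 g2 :
  rcomm (rT x0 x1 x2 x3 m e g1 g2) (rC1 x0 x2) = rT x0 x1 x2 x3 (m * (g1 * (x2 - x0) + g2 * (x3 - x1))) (- e) 1 0.
Proof. cid. Qed.
Lemma E8 x0 x1 x2 x3 m e g1 g2 :
  rcomm (rT x0 x1 x2 x3 m e g1 g2) (rC2 x1 x3) = rT x0 x1 x2 x3 (m * (g1 * (x2 - x0) + g2 * (x3 - x1))) (- e) 0 1.
Proof. cid. Qed.
Lemma Pcc1 x0 x1 x2 x3 nu1 nu2 : rcomm (rmm (rc x0 x1 x2 x3 nu1) (rc x0 x1 x2 x3 nu2)) (rC1 x0 x2) = rmzero K.
Proof. cid. Qed.
Lemma Pcc2 x0 x1 x2 x3 nu1 nu2 : rcomm (rmm (rc x0 x1 x2 x3 nu1) (rc x0 x1 x2 x3 nu2)) (rC2 x1 x3) = rmzero K.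
Proof. cid. Qed.
Lemma Pcc3 x0 x1 x2 x3 nu1 nu2 nu : rmm (rmm (rc x0 x1 x2 x3 nu1) (rc x0 x1 x2 x3 nu2)) (rc x0 x1 x2 x3 nu) = rmzero K.
Proof. cid. Qed.
Lemma PcT1 x0 x1 x2 x3 nu1 m' e' h1 h2 : rcomm (rmm (rc x0 x1 x2 x3 nu1) (rT x0 x1 x2 x3 m' e' h1 h2)) (rC1 x0 x2) = rmzero K.
Proof. cid. Qed.
Lemma PcT2 x0 x1 x2 x3 nu1 m' e' h1 h2 : rcomm (rmm (rc x0 x1 x2 x3 nu1) (rT x0 x1 x2 x3 m' e' h1 h2)) (rC2 x1 x3) = rmzero K.
Proof. cid. Qed.
Lemma PcT3 x0 x1 x2 x3 nu1 m' e' h1 h2 nu : rmm (rmm (rc x0 x1 x2 x3 nu1) (rT x0 x1 x2 x3 m' e' h1 h2)) (rc x0 x1 x2 x3 nu) = rmzero K.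
Proof. cid. Qed.
Lemma PTc1 x0 x1 x2 x3 m e g1 g2 nu2 : rcomm (rmm (rT x0 x1 x2 x3 m e g1 g2) (rc x0 x1 x2 x3 nu2)) (rC1 x0 x2) = rmzero K.
Proof. cid. Qed.
Lemma PTc2 x0 x1 x2 x3 m e g1 g2 nu2 : rcomm (rmm (rT x0 x1 x2 x3 m e g1 g2) (rc x0 x1 x2 x3 nu2)) (rC2 x1 x3) = rmzero K.
Proof. cid. Qed.
Lemma PTc3 x0 x1 x2 x3 m e g1 g2 nu2 nu : rmm (rmm (rT x0 x1 x2 x3 m e g1 g2) (rc x0 x1 x2 x3 nu2)) (rc x0 x1 x2 x3 nu) = rmzero K.
Proof. cid. Qed.
Lemma PTT1 x0 x1 x2 x3 m e g1 g2 m' e' h1 h2 : rcomm (rmm (rT x0 x1 x2 x3 m e g1 g2) (rT x0 x1 x2 x3 m' e' h1 h2)) (rC1 x0 x2) = rmzero K.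
Proof. cid. Qed.
Lemma PTT2 x0 x1 x2 x3 m e g1 g2 m' e' h1 h2 : rcomm (rmm (rT x0 x1 x2 x3 m e g1 g2) (rT x0 x1 x2 x3 m' e' h1 h2)) (rC2 x1 x3) = rmzero K.
Proof. cid. Qed.
Lemma PTT3 x0 x1 x2 x3 m e g1 g2 m' e' h1 h2 nu : rmm (rmm (rT x0 x1 x2 x3 m e g1 g2) (rT x0 x1 x2 x3 m' e' h1 h2)) (rc x0 x1 x2 x3 nu) = rmzero K.
Proof. cid. Qed.
End E.

Section F.
Variable K : fieldType.
Local Notation M2 := (M2 K).

Ltac mlaw := repeat match goal with | A : M4 _ |- _ => destruct A | r : R16 _ |- _ => destruct r end;
  apply: M4_eta; apply: R16_eta; simpl; ring.

Lemma L_A (a b c : M2) : mxmul2 (mxmul2 a b) c = mxmul2 a (mxmul2 b c).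
Proof.
rewrite -(toM_ofM a) -(toM_ofM b) -(toM_ofM c); move: (ofM a) (ofM b) (ofM c) => A B C.
rewrite !toM_mul; congr toM; mlaw.
Qed.

Lemma L_Dl (a b c : M2) : mxmul2 (a + b) c = mxmul2 a c + mxmul2 b c.
Proof.
rewrite -(toM_ofM a) -(toM_ofM b) -(toM_ofM c); move: (ofM a) (ofM b) (ofM c) => A B C.
rewrite !toM_add !toM_mul toM_add; congr toM; mlaw.
Qed.

Lemma L_Dr (a b c : M2) : mxmul2 c (a + b) = mxmul2 c a + mxmul2 c b.
Proof.
rewrite -(toM_ofM a) -(toM_ofM b) -(toM_ofM c); move: (ofM a) (ofM b) (ofM c) => A B C.
rewrite !toM_add !toM_mul toM_add; congr toM; mlaw.
Qed.

Lemma L_1l (a : M2) : mxmul2 (mxone2 K) a = a.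
Proof.
rewrite -(toM_ofM a); move: (ofM a) => A.
rewrite toM_one toM_mul; congr toM; mlaw.
Qed.

Lemma L_1r (a : M2) : mxmul2 a (mxone2 K) = a.
Proof.
rewrite -(toM_ofM a); move: (ofM a) => A.
rewrite toM_one toM_mul; congr toM; mlaw.
Qed.

Lemma L_Sl s (a b : M2) : mxmul2 (mxscale2 s a) b = mxscale2 s (mxmul2 a b).
Proof.
rewrite -(toM_ofM a) -(toM_ofM b); move: (ofM a) (ofM b) => A B.
rewrite !toM_scale !toM_mul toM_scale; congr toM; mlaw.
Qed.

Lemma L_Sr s (a b : M2) : mxmul2 a (mxscale2 s b) = mxscale2 s (mxmul2 a b).
Proof.
rewrite -(toM_ofM a) -(toM_ofM b); move: (ofM a) (ofM b) => A B.
rewrite !toM_scale !toM_mul toM_scale; congr toM; mlaw.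
Qed.

Lemma L_SB s (a b : M2) : mxscale2 s (a - b) = mxscale2 s a - mxscale2 s b.
Proof.
apply/matrixP => i j; rewrite !mxE; apply/ffunP => S; rewrite !ffunE.
by rewrite scalerBr.
Qed.

Lemma L_S0 s : mxscale2 s (0 : M2) = 0.
Proof.
apply/matrixP => i j; rewrite !mxE; apply/ffunP => S; rewrite !ffunE.
by rewrite scaler0.
Qed.

Lemma L_Sm1 (a : M2) : mxscale2 (-1) a = - a.
Proof.
apply/matrixP => i j; rewrite !mxE; apply/ffunP => S; rewrite !ffunE.
by rewrite scaleN1r.
Qed.

Lemma L_0r (a : M2) : mxmul2 a 0 = 0.
Proof.
rewrite -(toM_ofM a); move: (ofM a) => A.
rewrite toM_zero toM_mul; congr toM; mlaw.
Qed.

Lemma L_0l (a : M2) : mxmul2 0 a = 0.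
Proof.
rewrite -(toM_ofM a); move: (ofM a) => A.
rewrite toM_zero toM_mul; congr toM; mlaw.
Qed.

Lemma L_Bl (a b c : M2) : mxmul2 (a - b) c = mxmul2 a c - mxmul2 b c.
Proof.
rewrite -(toM_ofM a) -(toM_ofM b) -(toM_ofM c); move: (ofM a) (ofM b) (ofM c) => A B C.
rewrite !toM_opp !toM_add !toM_mul toM_opp toM_add; congr toM; mlaw.
Qed.

Lemma L_Br (a b c : M2) : mxmul2 c (a - b) = mxmul2 c a - mxmul2 c b.
Proof.
rewrite -(toM_ofM a) -(toM_ofM b) -(toM_ofM c); move: (ofM a) (ofM b) (ofM c) => A B C.
rewrite !toM_opp !toM_add !toM_mul toM_opp toM_add; congr toM; mlaw.
Qed.

End F.

Section G.
Variable K : fieldType.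
Local Notation M2 := (M2 K).
Local Notation KX := (Defs.KX K).

Definition X0 : KX := 'X_i0.
Definition X1 : KX := 'X_i1.
Definition X2 : KX := 'X_i2.
Definition X3 : KX := 'X_i3.

Lemma z0 : (0 : 'I_4) = i0. Proof. exact/val_inj. Qed.
Lemma z1 : (1 : 'I_4) = i1. Proof. exact/val_inj. Qed.
Lemma z2 : (2 : 'I_4) = i2. Proof. exact/val_inj. Qed.
Lemma z3 : (3 : 'I_4) = i3. Proof. exact/val_inj. Qed.

Lemma C1E : C1 K = toM (rC1 X0 X2).
Proof.
by rewrite /C1 z0 z2 !toSC_xv toSC_yv0 toSC_yv2.
Qed.

Lemma C2E : C2 K = toM (rC2 X1 X3).
Proof.
by rewrite /C2 z3 z1 !toSC_xv toSC_yv1 toSC_yv3.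
Qed.

Lemma commE (A B : M4 K) : comm2 (toM A) (toM B) = toM (rcomm A B).
Proof. by rewrite /comm2 !toM_mul toM_opp toM_add. Qed.


Definition commutes (a b : M2) := mxmul2 a b = mxmul2 b a.

Lemma CgenE (i : 'I_2) : Cgen K i = C1 K \/ Cgen K i = C2 K.
Proof. by rewrite /Cgen; case: (nat_of_ord i == 0%N); [left|right]. Qed.

Lemma comm_F (w : M2) : commutes w (C1 K) -> commutes w (C2 K) -> forall b, inF b -> commutes w b.
Proof.
move=> h1 h2 b; elim => [|i|a b' _ ha _ hb|s a _ ha|a b' _ ha _ hb]; rewrite /commutes.
- by rewrite L_1l L_1r.
- by case: (CgenE i) => ->.
- by rewrite L_Dl L_Dr ha hb.
- by rewrite L_Sl L_Sr ha.
- by rewrite -L_A ha L_A hb L_A.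
Qed.

Lemma inF_neg (a : M2) : inF a -> inF (- a).
Proof. by move=> h; rewrite -L_Sm1; apply: inF_scale. Qed.

Lemma inF_comm (a b : M2) : inF a -> inF b -> inF (comm2 a b).
Proof. by move=> ha hb; rewrite /comm2; apply: inF_add; [apply: inF_mul|apply: inF_neg; apply: inF_mul]. Qed.

Lemma inF_Cgen i : inF (Cgen K i).
Proof. exact: inF_gen. Qed.

Lemma inF_lncomm w : inF (lncomm K w).
Proof.
case: w => [|i s] /=; first exact: inF_one.
elim: s (Cgen K i) (inF_Cgen i) => [|k s IH] acc hacc //=.
by apply: IH; apply: inF_comm => //; apply: inF_Cgen.
Qed.

Definition good (u : M2) :=
  (exists nu, u = toM (rc X0 X1 X2 X3 nu)) \/ (exists m e g1 g2, u = toM (rT X0 X1 X2 X3 m e g1 g2)).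

Lemma good_init i k : good (comm2 (Cgen K i) (Cgen K k)).
Proof.
left; case: (CgenE i) => ->; case: (CgenE k) => ->; rewrite ?C1E ?C2E commE.
- by exists 0; rewrite (E1 X0 X1 X2 X3).
- by exists 1; rewrite E3.
- by exists (-1); rewrite E4.
- by exists 0; rewrite (E2 X0 X1 X2 X3).
Qed.

Lemma good_step u k : good u -> good (comm2 u (Cgen K k)).
Proof.
move=> [[nu ->]|[m [e [g1 [g2 ->]]]]]; right; case: (CgenE k) => ->; rewrite ?C1E ?C2E commE.
- by exists nu, (-1), 1, 0; rewrite E5.
- by exists nu, (-1), 0, 1; rewrite E6.
- by eexists _, _, _, _; rewrite E7.
- by eexists _, _, _, _; rewrite E8.
Qed.

Lemma good_lncomm w : (2 <= size w)%N -> good (lncomm K w).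
Proof.
case: w => [|i [|k s]] //= _.
elim: s (comm2 (Cgen K i) (Cgen K k)) (good_init i k) => [|j s IH] acc hacc //=.
by apply: IH; apply: good_step.
Qed.

End G.

Section H.
Variable K : fieldType.
Local Notation M2 := (M2 K).

Lemma init_rc i k : exists nu, comm2 (Cgen K i) (Cgen K k) = toM (rc (X0 K) (X1 K) (X2 K) (X3 K) nu).
Proof.
case: (CgenE K i) => ->; case: (CgenE K k) => ->; rewrite ?C1E ?C2E commE.
- by exists 0; rewrite (E1 (X0 K) (X1 K) (X2 K) (X3 K)).
- by exists 1; rewrite E3.
- by exists (-1); rewrite E4.
- by exists 0; rewrite (E2 (X0 K) (X1 K) (X2 K) (X3 K)).
Qed.

Lemma Zc1 (U1 U2 : M4 K) : rcomm (rmm U1 U2) (rC1 (X0 K) (X2 K)) = rmzero K ->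
  comm2 (mxmul2 (toM U1) (toM U2)) (C1 K) = 0.
Proof. by move=> h; rewrite C1E toM_mul commE h -toM_zero. Qed.
Lemma Zc2 (U1 U2 : M4 K) : rcomm (rmm U1 U2) (rC2 (X1 K) (X3 K)) = rmzero K ->
  comm2 (mxmul2 (toM U1) (toM U2)) (C2 K) = 0.
Proof. by move=> h; rewrite C2E toM_mul commE h -toM_zero. Qed.
Lemma Zc3 (U1 U2 : M4 K) : (forall nu, rmm (rmm U1 U2) (rc (X0 K) (X1 K) (X2 K) (X3 K) nu) = rmzero K) ->
  forall nu, mxmul2 (mxmul2 (toM U1) (toM U2)) (toM (rc (X0 K) (X1 K) (X2 K) (X3 K) nu)) = 0.
Proof. by move=> h nu; rewrite !toM_mul h -toM_zero. Qed.

Lemma good_prod (u1 u2 : M2) : good u1 -> good u2 ->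
  [/\ comm2 (mxmul2 u1 u2) (C1 K) = 0, comm2 (mxmul2 u1 u2) (C2 K) = 0
    & forall nu, mxmul2 (mxmul2 u1 u2) (toM (rc (X0 K) (X1 K) (X2 K) (X3 K) nu)) = 0].
Proof.
move=> [[nu1 ->]|[m [e [g1 [g2 ->]]]]] [[nu2 ->]|[m' [e' [h1 [h2 ->]]]]]; split.
- apply: Zc1; exact: Pcc1.
- apply: Zc2; exact: Pcc2.
- apply: Zc3 => nu; exact: Pcc3.
- apply: Zc1; exact: PcT1.
- apply: Zc2; exact: PcT2.
- apply: Zc3 => nu; exact: PcT3.
- apply: Zc1; exact: PTc1.
- apply: Zc2; exact: PTc2.
- apply: Zc3 => nu; exact: PTc3.
- apply: Zc1; exact: PTT1.
- apply: Zc2; exact: PTT2.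
- apply: Zc3 => nu; exact: PTT3.
Qed.

Lemma comm0 (a b : M2) : comm2 a b = 0 -> commutes a b.
Proof. by move/eqP; rewrite /comm2 subr_eq0 => /eqP. Qed.

Lemma main (Z : M2) : inF Z -> commutes Z (C1 K) -> commutes Z (C2 K) ->
  (forall i k, mxmul2 Z (comm2 (Cgen K i) (Cgen K k)) = 0) -> strongly_centralF Z.
Proof.
move=> hZ h1 h2 hann.
have hc := comm_F h1 h2.
have ann : forall b, inF b -> forall k, mxmul2 Z (comm2 b (Cgen K k)) = 0.
  move=> b; elim => [|i|a b' _ ha _ hb|s a _ ha|a b' ha IHa hb IHb] k.
  - by rewrite /comm2 L_1l L_1r subrr L_0r.
  - exact: hann.
  - have -> : comm2 (a + b') (Cgen K k) = comm2 a (Cgen K k) + comm2 b' (Cgen K k).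
      by rewrite /comm2 L_Dl L_Dr opprD addrACA.
    by rewrite L_Dr ha hb addr0.
  - have -> : comm2 (mxscale2 s a) (Cgen K k) = mxscale2 s (comm2 a (Cgen K k)).
      by rewrite /comm2 L_Sl L_Sr L_SB.
    by rewrite L_Sr ha L_S0.
  - have -> : comm2 (mxmul2 a b') (Cgen K k) =
        mxmul2 a (comm2 b' (Cgen K k)) + mxmul2 (comm2 a (Cgen K k)) b'.
      by rewrite /comm2 L_Br L_Bl !L_A addrA subrK.
    rewrite L_Dr -!L_A IHa L_0l addr0 (hc a ha) L_A IHb.
    exact: L_0r.
split; first by split.
move=> b hb; split; first exact: inF_mul.
have hk : forall k, commutes (mxmul2 Z b) (Cgen K k).
  move=> k; rewrite /commutes L_A.
  have -> : mxmul2 b (Cgen K k) = mxmul2 (Cgen K k) b + comm2 b (Cgen K k).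
    by rewrite /comm2 addrC subrK.
  rewrite L_Dr ann // addr0 -L_A (hc _ (@inF_gen K k)) L_A //.
apply: comm_F.
- by have := hk (Ordinal (isT : (0 < 2)%N)).
- by have := hk (Ordinal (isT : (1 < 2)%N)).
Qed.

End H.

Unset Implicit Arguments.
Set Strict Implicit.

Theorem lemma7 (K : fieldType)
  (K_infinite : forall s : seq K, exists x : K, x \notin s)
  (K_char : (2%:R : K) != 0)
  (w1 w2 : seq 'I_2) (hw1 : (2 <= size w1)%N) (hw2 : (2 <= size w2)%N) :
  strongly_centralF (mxmul2 (lncomm K w1) (lncomm K w2)).
Proof.
have g1 := good_lncomm K hw1; have g2 := good_lncomm K hw2.
have [h1 h2 h3] := good_prod g1 g2.
apply: main.
- by apply: inF_mul; apply: inF_lncomm.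
- exact: comm0.
- exact: comm0.
- move=> i k; have [nu ->] := init_rc K i k; exact: h3.
Qed.
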